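(* Let $\mathbf c\in\mathbb N^\infty$ with $\|\mathbf c\|\ge2$. Then $$\frac{(|\mathbf c|+\|\mathbf c\|-3)!}{(|\mathbf c|-1)!}\,(\|\mathbf c\|-1)=\frac12\sum_{\substack{\mathbf c=\mathbf a+\mathbf b\\ \mathbf a,\mathbf b\ne0}}\binom{\mathbf c}{\mathbf a,\mathbf b}\frac{(|\mathbf a|+\|\mathbf a\|-2)!\,(|\mathbf b|+\|\mathbf b\|-2)!}{(|\mathbf a|-1)!\,(|\mathbf b|-1)!},$$ the sum running over $\mathbf a,\mathbf b\in\mathbb N^\infty$.
   Context: $\mathbb N^\infty$ is the set of sequences $\mathbf d=(d_1,d_2,\dots)$ of nonnegative integers, almost all zero, with componentwise addition; $|\mathbf d|=\sum_iid_i$, $\|\mathbf d\|=\sum_id_i$, and $\binom{\mathbf c}{\mathbf a,\mathbf b}=\prod_{i\ge1}\frac{c_i!}{a_i!\,b_i!}$. *)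

(* Defs.v *)
From mathcomp Require Import all_boot all_order all_algebra.
Set Implicit Arguments. Unset Strict Implicit. Unset Printing Implicit Defensive.
Import Order.TTheory GRing.Theory Num.Theory.

(* An element d of N^infty supported in {1,...,n} is represented by
   d : 'I_n -> nat, with d (i : 'I_n) standing for d_{i+1}. *)

Definition wt n (d : 'I_n -> nat) : nat := (\sum_(i < n) i.+1 * d i)%N.
Definition len n (d : 'I_n -> nat) : nat := (\sum_(i < n) d i)%N.

Definition multinom n (c a b : 'I_n -> nat) : rat :=
  (\prod_(i < n) ((c i)`!%:R / ((a i)`!%:R * (b i)`!%:R)))%R.

(* the largest entry of c: any a with a + b = c has entries bounded by it *)
Definition maxc n (c : 'I_n -> nat) : nat := (\max_(i < n) c i)%N.

Definition bnd n (c : 'I_n -> nat) := {ffun 'I_n -> 'I_(maxc c).+1}.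

Definition natv n m (a : {ffun 'I_n -> 'I_m}) : 'I_n -> nat := fun i => nat_of_ord (a i).

Definition decomp n (c a b : 'I_n -> nat) : bool :=
  [forall i, a i + b i == c i] && [exists i, a i != 0%N] && [exists i, b i != 0%N].

Definition term n (a : 'I_n -> nat) : rat :=
  ((wt a + len a - 2)`!%:R / (wt a - 1)`!%:R)%R.

(* Main.v *)
Require Import Defs.
From mathcomp Require Import all_boot all_order all_algebra.
From mathcomp Require Import ring lra zify.
From Stdlib Require Import FunctionalExtensionality.
Import Order.TTheory GRing.Theory Num.Theory.
Set Implicit Arguments. Unset Strict Implicit. Unset Printing Implicit Defensive.
Local Open Scope ring_scope.

Definition rf (x : rat) (j : nat) : rat := \prod_(i < j) (x + i%:R).

Lemma rf0 x : rf x 0 = 1.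
Proof. by rewrite /rf big_ord0. Qed.

Lemma rfS x j : rf x j.+1 = rf x j * (x + j%:R).
Proof. by rewrite /rf big_ord_recr. Qed.

Lemma rfSl x j : rf x j.+1 = x * rf (x + 1) j.
Proof.
rewrite /rf big_ord_recl /= addr0; congr (_ * _).
apply: eq_bigr => i _; rewrite /bump /= add1n -addn1 natrD; ring.
Qed.

Lemma rf_diff x j : rf (x + 1) j - rf x j = j%:R * rf (x + 1) j.-1.
Proof.
case: j => [|j]; first by rewrite !rf0 subrr mul0r.
rewrite rfS rfSl /= -[j.+1]addn1 natrD; ring.
Qed.

Lemma rf_prod x p r : rf x p * rf (1 - x) r = (-1) ^+ r * rf (x - r%:R) (p + r).
Proof.
elim: r => [|r IH]; first by rewrite rf0 mulr1 expr0 mul1r subr0 addn0.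
rewrite rfS mulrA IH addnS rfSl.
have -> : x - r.+1%:R + 1 = x - r%:R by rewrite -addn1 natrD; ring.
rewrite exprS; ring.
Qed.

Lemma fact_rf n j : ((n + j)`!)%:R = (n`!)%:R * rf (n.+1)%:R j :> rat.
Proof.
elim: j => [|j IH]; first by rewrite addn0 rf0 mulr1.
rewrite addnS factS natrM IH rfS -addn1 !natrD; ring.
Qed.
Definition Cf n (c a : 'I_n -> nat) : rat := \prod_(i < n) ('C(c i, a i))%:R.
Definition SS n N (c : 'I_n -> nat) (F : ('I_n -> nat) -> rat) : rat :=
  \sum_(a : {ffun 'I_n -> 'I_N.+1}) Cf c (natv a) * F (natv a).
Definition inc n (j : 'I_n) (c : 'I_n -> nat) : 'I_n -> nat :=
  fun i => if i == j then (c i).+1 else c i.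
Definition dec n (j : 'I_n) (c : 'I_n -> nat) : 'I_n -> nat :=
  fun i => if i == j then (c i).-1 else c i.
Definition sub n (c a : 'I_n -> nat) : 'I_n -> nat := fun i => (c i - a i)%N.
Definition leb n (a c : 'I_n -> nat) : bool := [forall i, a i <= c i]%N.

Lemma Cf_eq0 n (c a : 'I_n -> nat) : ~~ leb a c -> Cf c a = 0.
Proof.
move/forallPn => [i]; rewrite -ltnNge => hi.
by rewrite /Cf (bigD1 i) //= bin_small // mul0r.
Qed.

Lemma SS_le n N (c : 'I_n -> nat) F G :
  (forall a, leb a c -> F a = G a) -> SS N c F = SS N c G.
Proof.
move=> h; apply: eq_bigr => a _.
case hl: (leb (natv a) c); first by rewrite h.
by rewrite Cf_eq0 ?hl // !mul0r.
Qed.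

Lemma len_inc n (j : 'I_n) a : len (inc j a) = (len a).+1.
Proof.
rewrite /len (bigD1 j) //= [in RHS](bigD1 j) //= /inc eqxx addSn; congr (_.+1 + _)%N.
by apply: eq_bigr => i /negbTE ->.
Qed.

Lemma wt_inc n (j : 'I_n) a : wt (inc j a) = (wt a + j.+1)%N.
Proof.
rewrite /wt (bigD1 j) //= [in RHS](bigD1 j) //= /inc eqxx mulnS.
rewrite (eq_bigr (fun i : 'I_n => i.+1 * a i)%N); first by rewrite -addnA addnC.
by move=> i /negbTE ->.
Qed.

Lemma incK n (j : 'I_n) c : (0 < c j)%N -> inc j (dec j c) = c.
Proof.
move=> h; apply: functional_extensionality => i; rewrite /inc /dec.
by case: eqP => // ->; rewrite prednK.
Qed.

Lemma decK n (j : 'I_n) c : dec j (inc j c) = c.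
Proof.
apply: functional_extensionality => i; rewrite /inc /dec.
by case: eqP.
Qed.

Lemma len_sub n (c a : 'I_n -> nat) : leb a c -> (len (sub c a) + len a)%N = len c.
Proof.
move/forallP => h; rewrite /len -big_split; apply: eq_bigr => i _.
by rewrite /sub /= subnK.
Qed.

Lemma wt_sub n (c a : 'I_n -> nat) : leb a c -> (wt (sub c a) + wt a)%N = wt c.
Proof.
move/forallP => h; rewrite /wt -big_split; apply: eq_bigr => i _.
by rewrite /sub /= -mulnDr subnK.
Qed.

Lemma wt_ge_len n (a : 'I_n -> nat) : (len a <= wt a)%N.
Proof. by apply: leq_sum => i _; rewrite leq_pmull. Qed.

Lemma len_eq0 n (a : 'I_n -> nat) : (len a == 0%N) = [forall i, a i == 0%N].
Proof. by rewrite /len sum_nat_eq0. Qed.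

Lemma wt_len0 n (a : 'I_n -> nat) : len a = 0%N -> wt a = 0%N.
Proof.
move/eqP; rewrite len_eq0 => /forallP h.
by rewrite /wt big1 // => i _; rewrite (eqP (h i)) muln0.
Qed.

Lemma Cf_inc n (j : 'I_n) c a :
  Cf (inc j c) a = Cf c a + (0 < a j)%N%:R * Cf c (dec j a).
Proof.
rewrite /Cf (bigD1 j) //= [X in _ = X + _](bigD1 j) //= [X in _ = _ + _ * X](bigD1 j) //=.
have -> : \prod_(i < n | i != j) ('C(inc j c i, a i))%:R
     = \prod_(i < n | i != j) ('C(c i, a i))%:R :> rat.
  by apply: eq_bigr => i /negbTE h; rewrite /inc h.
have -> : \prod_(i < n | i != j) ('C(c i, dec j a i))%:R
     = \prod_(i < n | i != j) ('C(c i, a i))%:R :> rat.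
  by apply: eq_bigr => i /negbTE h; rewrite /dec h.
rewrite /inc /dec eqxx; case: (a j) => [|k] /=.
  by rewrite !bin0 mul0r addr0.
by rewrite binS natrD mul1r; ring.
Qed.

Definition sig n N (j : 'I_n) (a : {ffun 'I_n -> 'I_N.+1}) : {ffun 'I_n -> 'I_N.+1} :=
  [ffun i => if i == j then ordS (a i) else a i].

Lemma sig_inj n N (j : 'I_n) : injective (@sig n N j).
Proof.
move=> a b /ffunP h; apply/ffunP => i; have := h i; rewrite !ffunE.
by case: eqP => _ //; apply: ordS_inj.
Qed.

Lemma SS_pascal n N (j : 'I_n) c F :
  (forall i, c i <= N)%N -> (c j < N)%N ->
  SS N (inc j c) F = SS N c F + SS N c (fun a => F (inc j a)).
Proof.
move=> hN hj.
rewrite /SS -big_split /=.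
rewrite (eq_bigr (fun a => Cf c (natv a) * F (natv a) +
   (0 < natv a j)%N%:R * Cf c (dec j (natv a)) * F (natv a))); last first.
  by move=> a _; rewrite Cf_inc mulrDl.
rewrite big_split [RHS]big_split /=; congr (_ + _).
rewrite (reindex_inj (@sig_inj n N j)) /=; apply: eq_bigr => a _.
have hs : natv (sig j a) j = ((a j).+1 %% N.+1)%N by rewrite /natv ffunE eqxx.
case: (ltnP (a j) N) => ha.
  have e : natv (sig j a) = inc j (natv a).
    apply: functional_extensionality => i; rewrite /natv /inc ffunE.
    case: eqP => [->|] //=; by rewrite modn_small.
  by rewrite e decK /inc eqxx /= mul1r.
have e : nat_of_ord (a j) = N by apply/eqP; rewrite eqn_leq ha -ltnS ltn_ord.
rewrite hs e modnn /= mul0r mul0r.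
by rewrite /Cf (bigD1 j) //= /natv e bin_small // !mul0r.
Qed.
Lemma size_shift_diff (p : {poly rat}) (u : rat) :
  (size (p - (p \Po ('X + u%:P)))%R <= (size p).-1)%N.
Proof.
set q := p \Po ('X + u%:P).
have sq : size ('X + u%:P : {poly rat}) = 2%N by rewrite size_XaddC.
have hsq : size q = size p by rewrite size_comp_poly2.
have hlq : lead_coef q = lead_coef p.
  by rewrite lead_coef_comp ?sq // lead_coefXaddC expr1n mulr1.
apply/leq_sizeP => i hi; rewrite coefB.
case: (ltnP i (size p)) => hip.
  have -> : i = (size p).-1.
    by apply/eqP; rewrite eqn_leq hi andbT -ltnS (leq_trans hip) // leqSpred.
  by move: hlq; rewrite /lead_coef hsq => ->; rewrite subrr.
by rewrite !nth_default ?subrr // hsq.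
Qed.

Lemma SS_add n N (c : 'I_n -> nat) F G :
  SS N c (fun a => F a + G a) = SS N c F + SS N c G.
Proof. by rewrite /SS -big_split /=; apply: eq_bigr => a _; rewrite mulrDr. Qed.

Lemma SS_scale n N (c : 'I_n -> nat) k F :
  SS N c (fun a => k * F a) = k * SS N c F.
Proof. by rewrite /SS mulr_sumr; apply: eq_bigr => a _; rewrite mulrCA. Qed.

Lemma SS_sum n N (c : 'I_n -> nat) (F : 'I_n -> ('I_n -> nat) -> rat) :
  SS N c (fun a => \sum_(i < n) F i a) = \sum_(i < n) SS N c (F i).
Proof.
rewrite /SS (exchange_big) /=; apply: eq_bigr => a _; by rewrite mulr_sumr.
Qed.

Lemma exists_pos n (c : 'I_n -> nat) : (0 < len c)%N -> exists j, (0 < c j)%N.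
Proof.
move=> h; apply/existsP; apply: contraT; rewrite negb_exists => /forallP H.
have : len c == 0%N by rewrite len_eq0; apply/forallP => i; have := H i; rewrite lt0n negbK.
by move/eqP => e; rewrite e in h.
Qed.

Lemma dec_le n N (j : 'I_n) c : (forall i, c i <= N)%N -> (forall i, dec j c i <= N)%N.
Proof. by move=> h i; rewrite /dec; case: eqP => _ //; apply: leq_trans (leq_pred _) (h i). Qed.

Lemma dec_lt n N (j : 'I_n) c : (forall i, c i <= N)%N -> (0 < c j)%N -> (dec j c j < N)%N.
Proof. by move=> h hj; rewrite /dec eqxx prednK // -ltnS (leq_trans _ (h j)) ?ltnS ?prednK. Qed.

Lemma FDL n N : forall K (c : 'I_n -> nat), len c = K -> (forall i, c i <= N)%N ->
  forall p : {poly rat}, (size p <= K)%N ->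
  SS N c (fun a => (-1) ^+ len a * p.[(wt a + len a)%:R]) = 0.
Proof.
elim=> [|K IH] c hK hN p hp.
  move: hp; rewrite leqn0 size_poly_eq0 => /eqP ->.
  by rewrite /SS big1 // => a _; rewrite horner0 !mulr0.
have [j hj] := exists_pos (eq_ind_r (fun x => (0 < x)%N) (ltn0Sn K) hK).
have h1 := dec_le j hN; have h2 := dec_lt hN hj.
rewrite -(incK hj) SS_pascal //.
set u := (j.+2)%:R : rat.
have -> : SS N (dec j c) (fun a => (-1) ^+ len (inc j a) * p.[(wt (inc j a) + len (inc j a))%:R])
   = SS N (dec j c) (fun a =>
     - ((-1) ^+ len a * (p \Po ('X + u%:P)).[(wt a + len a)%:R])).
  apply: eq_bigr => a _; congr (_ * _); rewrite len_inc wt_inc horner_comp.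
  rewrite hornerD hornerX hornerC exprS /u -natrD.
  have -> : (wt (natv a) + j.+1 + (len (natv a)).+1 = wt (natv a) + len (natv a) + j.+2)%N by lia.
  ring.
rewrite -SS_add.
have -> : SS N (dec j c) (fun a => (-1) ^+ len a * p.[(wt a + len a)%:R] +
     - ((-1) ^+ len a * (p \Po ('X + u%:P)).[(wt a + len a)%:R])) = SS N (dec j c) (fun a =>
     (-1) ^+ len a * (p - (p \Po ('X + u%:P))).[(wt a + len a)%:R]).
  by apply: eq_bigr => a _; rewrite hornerD hornerN; ring.
apply: IH.
- by have := len_inc j (dec j c); rewrite incK // hK => -[].
- exact: dec_le hN.
- by apply: leq_trans (size_shift_diff _ _) _; rewrite -ltnS; case: (size p) hp.
Qed.

Lemma sign_sub (k K : nat) : (k <= K)%N -> (-1) ^+ (K - k) = (-1) ^+ K * (-1) ^+ k :> rat.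
Proof.
move=> h; rewrite -{2}(subnK h) exprD -mulrA -expr2 sqrr_sign mulr1 //.
Qed.

Definition Pp n (a : 'I_n -> nat) : rat :=
  if len a == 0%N then 0 else rf (wt a)%:R (len a).-1.
Definition Tt n (b : 'I_n -> nat) (y : rat) : rat := rf (y + (wt b)%:R) (len b).

Lemma leb_len n (a c : 'I_n -> nat) : leb a c -> (len a <= len c)%N.
Proof. by move=> h; rewrite -(len_sub h) leq_addl. Qed.

Lemma leb_wt n (a c : 'I_n -> nat) : leb a c -> (wt a <= wt c)%N.
Proof. by move=> h; rewrite -(wt_sub h) leq_addl. Qed.

Definition zf n N : {ffun 'I_n -> 'I_N.+1} := [ffun _ => ord0].

Lemma SS_zero n N (c : 'I_n -> nat) : SS N c (fun a => (len a == 0%N)%:R) = 1.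
Proof.
rewrite /SS (bigD1 (zf n N)) //= big1 ?addr0.
  have -> : len (natv (zf n N)) = 0%N by rewrite /len big1 // => i _; rewrite /natv ffunE.
  by rewrite /Cf big1 ?mul1r // => i _; rewrite /natv ffunE bin0.
move=> a ha; case h: (len (natv a) == 0%N); last by rewrite mulr0.
exfalso; move: ha h; rewrite len_eq0 => /negP ha /forallP h; apply: ha.
by apply/eqP/ffunP => i; rewrite ffunE; apply/val_inj; apply/eqP; exact: h i.
Qed.

Lemma Cf_dec n (i : 'I_n) c a :
  Cf c a * (c i - a i)%:R = (c i)%:R * Cf (dec i c) a.
Proof.
rewrite /Cf (bigD1 i) //= [X in _ = _ * X](bigD1 i) //=.
have -> : \prod_(l < n | l != i) ('C(dec i c l, a l))%:R
     = \prod_(l < n | l != i) ('C(c l, a l))%:R :> rat.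
  by apply: eq_bigr => l /negbTE h; rewrite /dec h.
rewrite /dec eqxx.
have e := congr1 (fun x => x%:R : rat) (mul_bin_down (c i) (a i)).
rewrite /= !natrM in e.
by rewrite [RHS]mulrA e; ring.
Qed.

Lemma sub_inc n (i : 'I_n) c a : leb a c -> sub (inc i c) a = inc i (sub c a).
Proof.
move/forallP => h; apply: functional_extensionality => l; rewrite /sub /inc.
by case: eqP => // ->; rewrite subSn.
Qed.

Lemma Star0 n N (c : 'I_n -> nat) y : len c = 0%N ->
  SS N c (fun a => Pp a * Tt (sub c a) y) = 0.
Proof.
move=> h; rewrite (@SS_le _ _ _ _ (fun _ => 0)).
  by rewrite /SS big1 // => a _; rewrite mulr0.
move=> a ha; have : len a = 0%N by apply/eqP; rewrite -leqn0 -h leb_len.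
by rewrite /Pp => ->; rewrite eqxx mul0r.
Qed.

Lemma Star_base n N K (c : 'I_n -> nat) : len c = K.+1 -> (forall i, c i <= N)%N ->
  SS N c (fun a => Pp a * Tt (sub c a) (0%:R + 1 - (wt c)%:R)) = K.+1%:R * rf (0%:R + 1) K.
Proof.
move=> hK hN.
pose pG : {poly rat} := \prod_(i < K) ('X - ((K.+1)%:R - i%:R)%:P).
have hpG v : pG.[v] = rf (v - K.+1%:R) K.
  rewrite /pG horner_prod /rf; apply: eq_bigr => i _; rewrite hornerXsubC; ring.
have spG : (size pG <= K.+1)%N by rewrite /pG size_prod_XsubC /index_enum -enumT size_enum_ord.
rewrite (@SS_le _ _ _ _ (fun a => (-1) ^+ K.+1 * ((-1) ^+ len a * pG.[(wt a + len a)%:R]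
     + (- pG.[0]) * (len a == 0%N)%:R))).
  rewrite SS_scale SS_add SS_scale SS_zero (FDL hK hN spG) mulr1 add0r hpG.
  have e1 := rf_prod (-1) 0 K; rewrite rf0 mul1r add0n in e1.
  have e2 := rfSl 1 K; rewrite mul1r in e2.
  have e3 := rfS 1 K; rewrite e2 e1 in e3.
  have -> : 0 - K.+1%:R = -1 - K%:R :> rat by rewrite -addn1 natrD; ring.
  rewrite add0r exprS (_ : -1 * (-1) ^+ K * - rf (-1 - K%:R) K = (-1) ^+ K * rf (-1 - K%:R) K); last by ring.
  by rewrite e3 -addn1 natrD; ring.
move=> a ha.
have hl := len_sub ha; have hw := wt_sub ha; rewrite hK in hl.
rewrite /Pp /Tt.
case e: (len a) => [|k].
  by rewrite eqxx mul0r addn0 wt_len0 // expr0 mul1r mulr1 addrN mulr0.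
have hk : (k <= K)%N by rewrite -ltnS -e -hl leq_addl.
have hlb : len (sub c a) = (K - k)%N by rewrite -(addKn (len a) (len (sub c a))) addnC hl e subSS.
rewrite mulr0 addr0 hlb -[k.+1 == 0%N]/false -[k.+1.-1]/k.
have -> : 0%:R + 1 - (wt c)%:R + (wt (sub c a))%:R = 1 - (wt a)%:R :> rat.
  by rewrite -hw natrD; ring.
rewrite rf_prod subnKC // hpG.
have -> : (wt a + k.+1)%:R - K.+1%:R = (wt a)%:R - (K - k)%:R :> rat.
  by rewrite natrB // natrD -(addn1 k) -(addn1 K) !natrD; ring.
by rewrite sign_sub // !exprS; ring.
Qed.


Lemma SS_dec n N (i : 'I_n) (c : 'I_n -> nat) F :
  SS N c (fun a => (c i - a i)%:R * F a) = (c i)%:R * SS N (dec i c) F.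
Proof.
rewrite /SS mulr_sumr; apply: eq_bigr => a _.
by rewrite mulrA Cf_dec mulrA.
Qed.

Lemma Tt_step n (b : 'I_n -> nat) y :
  Tt b (y + 1) = Tt b y + (len b)%:R * rf (y + 1 + (wt b)%:R) (len b).-1.
Proof.
rewrite /Tt (_ : y + 1 + (wt b)%:R = y + (wt b)%:R + 1); last by ring.
by rewrite -rf_diff [RHS]addrC subrK.
Qed.

Lemma Star n N : forall K (c : 'I_n -> nat), len c = K -> (forall i, c i <= N)%N ->
  forall j : nat, SS N c (fun a => Pp a * Tt (sub c a) (j%:R + 1 - (wt c)%:R))
     = K%:R * rf (j%:R + 1) K.-1.
Proof.
elim=> [|K IH] c hK hN.
  by move=> j; rewrite Star0 // mul0r.
elim=> [|j IHj]; first exact: Star_base.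
pose y : rat := j%:R + 1 - (wt c)%:R.
have -> : j.+1%:R + 1 - (wt c)%:R = y + 1 by rewrite /y -(addn1 j) natrD; ring.
rewrite (_ : (fun a => Pp a * Tt (sub c a) (y + 1)) = (fun a => Pp a * Tt (sub c a) y
   + \sum_(i < n) ((c i - a i)%:R * (Pp a * rf (y + 1 + (wt (sub c a))%:R) (len (sub c a)).-1))));
   last first.
  apply: functional_extensionality => a.
  rewrite Tt_step mulrDr; congr (_ + _).
  rewrite {1}/len natr_sum mulr_suml mulr_sumr; apply: eq_bigr => i _; rewrite /sub; ring.
rewrite SS_add SS_sum IHj.
rewrite (eq_bigr (fun i : 'I_n => (c i)%:R * (K%:R * rf (j.+1%:R + 1) K.-1))); last first.
  move=> i _; rewrite SS_dec.
  case hci: (c i) => [|ci]; first by rewrite !mul0r.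
  rewrite -hci; congr (_ * _).
  have hci' : (0 < c i)%N by rewrite hci.
  set c' := dec i c.
  have ec : c = inc i c' by rewrite /c' incK.
  have hK' : len c' = K by move: hK; rewrite ec len_inc => -[].
  rewrite -(IH c' hK' (dec_le i hN) j.+1); apply: SS_le => a ha.
  have es : sub c a = inc i (sub c' a) by rewrite {1}ec sub_inc.
  rewrite /Tt es len_inc wt_inc -[(len (sub c' a)).+1.-1]/(len (sub c' a)).
  congr (_ * rf _ _).
  rewrite /y ec wt_inc !natrD -(addn1 j) natrD; ring.
rewrite -mulr_suml -natr_sum -/(len c) hK -[K.+1.-1]/K.
have h := rf_diff (j%:R + 1) K.
rewrite -(addn1 j) natrD -h; ring.
Qed.

Definition tau n N (c : 'I_n -> nat) (a : {ffun 'I_n -> 'I_N.+1}) : {ffun 'I_n -> 'I_N.+1} :=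
  [ffun i => if (a i <= c i)%N then inord (c i - a i) else a i].

Lemma tauE n N (c : 'I_n -> nat) (a : {ffun 'I_n -> 'I_N.+1}) i : (forall i, c i <= N)%N ->
  nat_of_ord (tau c a i) = if (a i <= c i)%N then (c i - a i)%N else nat_of_ord (a i).
Proof.
move=> hN; rewrite /tau ffunE; case: ifP => // _.
by rewrite inordK // ltnS (leq_trans (leq_subr _ _) (hN i)).
Qed.

Lemma tauK n N (c : 'I_n -> nat) : (forall i, c i <= N)%N -> cancel (@tau n N c) (@tau n N c).
Proof.
move=> hN a; apply/ffunP => i; apply: val_inj => /=.
rewrite (tauE _ _ hN) (tauE _ _ hN).
case h: (a i <= c i)%N; last by rewrite h.
by rewrite leq_subr subKn.
Qed.

Lemma SS_sym n N (c : 'I_n -> nat) (G : ('I_n -> nat) -> ('I_n -> nat) -> rat) :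
  (forall i, c i <= N)%N ->
  SS N c (fun a => G a (sub c a)) = SS N c (fun a => G (sub c a) a).
Proof.
move=> hN; rewrite /SS (reindex_inj (can_inj (tauK hN))); apply: eq_bigr => a _.
case hle: (leb (natv a) c).
  have e1 : natv (tau c a) = sub c (natv a).
    apply: functional_extensionality => i; rewrite /natv (tauE _ _ hN).
    move/forallP: hle => h; have := h i; rewrite /natv => hi.
    by rewrite hi.
  have e2 : sub c (sub c (natv a)) = natv a.
    apply: functional_extensionality => i; rewrite /sub subKn //.
    by move/forallP: hle.
  rewrite e1 e2; congr (_ * _).
  rewrite /Cf; apply: eq_bigr => i _; rewrite /sub bin_sub //.
  by move/forallP: hle.
rewrite (Cf_eq0 (negbT hle)) mul0r Cf_eq0 ?mul0r //.
move/negbT/forallPn: hle => [i hi]; apply/forallPn; exists i.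
by rewrite /natv (tauE _ _ hN) (negbTE hi).
Qed.

Lemma SS_sub n N (c : 'I_n -> nat) F G :
  SS N c (fun a => F a - G a) = SS N c F - SS N c G.
Proof. by rewrite /SS -sumrB; apply: eq_bigr => a _; rewrite mulrBr. Qed.

Lemma Tt_diff n (b : 'I_n -> nat) : Tt b 0 - Tt b (-1) = (len b)%:R * Pp b.
Proof.
rewrite /Tt /Pp (_ : 0 + (wt b)%:R = (-1 + (wt b)%:R) + 1); last by ring.
rewrite rf_diff; case: eqP => [->|_]; first by rewrite !mul0r.
by congr (_ * rf _ _); ring.
Qed.

Lemma key n N (c : 'I_n -> nat) : (2 <= len c)%N -> (forall i, c i <= N)%N ->
  SS N c (fun a => Pp a * Pp (sub c a)) = 2 * (len c).-1%:R * rf (wt c)%:R (len c).-2.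
Proof.
move=> h2 hN.
have hM : (2 <= wt c)%N by apply: leq_trans h2 (wt_ge_len c).
have h0 := Star (erefl (len c)) hN (wt c - 1).
have h1 := Star (erefl (len c)) hN (wt c - 2).
have ea : (wt c - 1)%:R = (wt c)%:R - 1 :> rat by rewrite natrB // (leq_trans _ hM).
have eb : (wt c - 2)%:R = (wt c)%:R - 2 :> rat by rewrite natrB.
rewrite ea (_ : (wt c)%:R - 1 + 1 - (wt c)%:R = 0) in h0; last by ring.
rewrite (_ : (wt c)%:R - 1 + 1 = (wt c)%:R) in h0; last by ring.
rewrite eb (_ : (wt c)%:R - 2 + 1 - (wt c)%:R = -1) in h1; last by ring.
rewrite (_ : (wt c)%:R - 2 + 1 = (wt c)%:R - 1) in h1; last by ring.
have E1 : SS N c (fun a => Pp a * ((len (sub c a))%:R * Pp (sub c a)))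
   = (len c)%:R * ((len c).-1%:R * rf (wt c)%:R (len c).-2).
  rewrite (_ : (fun a => Pp a * ((len (sub c a))%:R * Pp (sub c a)))
     = (fun a => Pp a * Tt (sub c a) 0 - Pp a * Tt (sub c a) (-1))); last first.
    by apply: functional_extensionality => a; rewrite -mulrBr Tt_diff.
  rewrite SS_sub h0 h1 -mulrBr; congr (_ * _).
  have := rf_diff ((wt c)%:R - 1) (len c).-1.
  by rewrite subrK => ->.
have E2 := SS_sym (fun x y => Pp x * ((len y)%:R * Pp y)) hN.
rewrite /= E1 in E2.
have hK0 : (len c)%:R != 0 :> rat by rewrite pnatr_eq0 -lt0n (leq_trans _ h2).
apply: (mulfI hK0).
have : SS N c (fun a => Pp a * ((len (sub c a))%:R * Pp (sub c a)) + Pp (sub c a) * ((len a)%:R * Pp a))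
     = (len c)%:R * SS N c (fun a => Pp a * Pp (sub c a)).
  rewrite -SS_scale; apply: SS_le => a ha.
  rewrite -(len_sub ha) natrD; ring.
rewrite SS_add E1 -E2 => <-; ring.
Qed.

Lemma term_Pp n (a : 'I_n -> nat) : len a != 0%N -> term a = Pp a.
Proof.
move=> h; have hk : (0 < len a)%N by rewrite lt0n.
have hm : (0 < wt a)%N by apply: leq_trans hk (wt_ge_len a).
rewrite /term /Pp (negbTE h).
have -> : (wt a + len a - 2 = (wt a).-1 + (len a).-1)%N.
  by rewrite -!subn1; lia.
rewrite fact_rf prednK // subn1 [X in X / _]mulrC mulfK // pnatr_eq0 -lt0n fact_gt0 //.
Qed.

Lemma multinom_Cf n (c a : 'I_n -> nat) : leb a c -> multinom c a (sub c a) = Cf c a.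
Proof.
move/forallP => h; rewrite /multinom /Cf; apply: eq_bigr => i _.
rewrite /sub /= -(bin_fact (h i)) !natrM mulfK // mulf_neq0 // pnatr_eq0 -lt0n fact_gt0 //.
Qed.

Lemma decomp_tau n N (c : 'I_n -> nat) (a b : {ffun 'I_n -> 'I_N.+1}) :
  (forall i, c i <= N)%N -> decomp c (natv a) (natv b) -> b = tau c a.
Proof.
move=> hN /andP [/andP [/forallP h _] _]; apply/ffunP => i; apply: val_inj => /=.
rewrite (tauE _ _ hN); have /eqP e := h i; rewrite /natv in e.
by rewrite -e leq_addr addKn.
Qed.

Lemma exists_len n (a : 'I_n -> nat) : [exists i, a i != 0%N] = (len a != 0%N).
Proof. by rewrite len_eq0 negb_forall. Qed.

Lemma inner n (c : 'I_n -> nat) (a : bnd c) :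
  \sum_(b : bnd c | decomp c (natv a) (natv b))
     multinom c (natv a) (natv b) * term (natv a) * term (natv b)
  = Cf c (natv a) * (Pp (natv a) * Pp (sub c (natv a))).
Proof.
have hN : forall i, (c i <= maxc c)%N by move=> i; exact: leq_bigmax.
case hd: (decomp c (natv a) (natv (tau c a))).
  rewrite (big_pred1 (tau c a)); last first.
    move=> b /=; apply/idP/eqP => [/(decomp_tau hN) //|->]; exact: hd.
  have hle : leb (natv a) c.
    move: hd => /andP [/andP [/forallP h _] _]; apply/forallP => i.
    by rewrite -(eqP (h i)) leq_addr.
  have e : natv (tau c a) = sub c (natv a).
    apply: functional_extensionality => i; rewrite /natv (tauE _ _ hN).
    by move/forallP: hle => h; have := h i; rewrite /natv => ->.
  move: hd; rewrite e => /andP [/andP [_ h1] h2].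
  rewrite exists_len in h1; rewrite exists_len in h2.
  by rewrite multinom_Cf // !term_Pp // mulrA.
rewrite big_pred0; last first.
  move=> b; apply/negP => hb; have e := decomp_tau hN hb.
  by move: hb; rewrite e hd.
case hle: (leb (natv a) c); last by rewrite Cf_eq0 ?hle // mul0r.
have e : natv (tau c a) = sub c (natv a).
  apply: functional_extensionality => i; rewrite /natv (tauE _ _ hN).
  by move/forallP: hle => h; have := h i; rewrite /natv => ->.
have H : [forall i, (natv a i + sub c (natv a) i == c i)%N].
  by apply/forallP => i; move/forallP: hle => h; rewrite /sub /= addnC subnK.
move: hd; rewrite e /decomp !exists_len H /= /Pp.
case: eqP => _ /=; first by rewrite mul0r mulr0.
by case: eqP => // _ _; rewrite mulr0 mulr0.
Qed.

Theorem propositionA2 (n : nat) (c : 'I_n -> nat) (hc : (2 <= len c)%N) :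
  ((wt c + len c - 3)`!%:R / (wt c - 1)`!%:R * (len c - 1)%:R : rat)
  = 1 / 2 * \sum_(p : bnd c * bnd c | decomp c (natv p.1) (natv p.2))
        multinom c (natv p.1) (natv p.2) * term (natv p.1) * term (natv p.2).
Proof.
have hN : forall i, (c i <= maxc c)%N by move=> i; exact: leq_bigmax.
have hM : (2 <= wt c)%N by apply: leq_trans hc (wt_ge_len c).
rewrite -(pair_big_dep xpredT (fun a b => decomp c (natv a) (natv b))
   (fun a b => multinom c (natv a) (natv b) * term (natv a) * term (natv b))) /=.
rewrite (eq_bigr (fun a : bnd c => Cf c (natv a) * (Pp (natv a) * Pp (sub c (natv a))))); last first.
  by move=> a _; exact: inner.
rewrite (_ : \sum_(a : bnd c) _ = SS (maxc c) c (fun a => Pp a * Pp (sub c a))) //.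
rewrite key //.
have -> : (wt c + len c - 3 = (wt c).-1 + (len c).-2)%N by rewrite -!subn1; lia.
rewrite fact_rf prednK ?(leq_trans _ hM) // subn1 [X in X / _]mulrC mulfK; last first.
  by rewrite pnatr_eq0 -lt0n fact_gt0.
by rewrite subn1; field.
Qed.
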